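(* Let $G$ be a connected bipartite graph on $n$ vertices and $m$ edges with incidence matrix $M$, and let $J=[(-1)^{d(i,j)}]$ be the $n\times n$ matrix whose $(i,j)$-entry is $(-1)^{d(i,j)}$. Then $M^+J=O_{m,n}$ and $J^2=nJ$.
   Context: The incidence matrix $M$ is the $n\times m$ matrix with $(i,j)$-entry $1$ if vertex $i$ is incident with edge $e_j$ and $0$ otherwise; $M^+$ is its Moore-Penrose inverse (the unique matrix with $MM^+M=M$, $M^+MM^+=M^+$, $(MM^+)^T=MM^+$, $(M^+M)^T=M^+M$). $d(i,j)$ is the graph distance; $O_{m,n}$ is the $m\times n$ zero matrix. *)

(* Defs.v *)
From HB Require Import structures.
From mathcomp Require Import all_boot all_order all_algebra.
Set Implicit Arguments. Unset Strict Implicit. Unset Printing Implicit Defensive.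
Import Order.TTheory GRing.Theory Num.Theory.
Local Open Scope ring_scope.

Definition simple_edges (n m : nat) (ends : 'I_m -> 'I_n * 'I_n) : Prop :=
  (forall j, (ends j).1 != (ends j).2) /\
  (forall j k, j != k ->
     ~ ((ends j).1 == (ends k).1 /\ (ends j).2 == (ends k).2 \/
        (ends j).1 == (ends k).2 /\ (ends j).2 == (ends k).1)).

Definition adj (n m : nat) (ends : 'I_m -> 'I_n * 'I_n) (u v : 'I_n) : bool :=
  [exists j, ((ends j).1 == u) && ((ends j).2 == v)
          || ((ends j).1 == v) && ((ends j).2 == u)].

Fixpoint walk (n m : nat) (ends : 'I_m -> 'I_n * 'I_n) (k : nat) (u v : 'I_n)
  : bool :=
  match k with
  | 0 => u == v
  | k'.+1 => [exists w, adj ends u w && walk ends k' w v]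
  end.

Definition connected_graph (n m : nat) (ends : 'I_m -> 'I_n * 'I_n) : Prop :=
  forall u v : 'I_n, exists k, walk ends k u v.

Definition bipartite_graph (n m : nat) (ends : 'I_m -> 'I_n * 'I_n) : Prop :=
  exists c : 'I_n -> bool, forall u v, adj ends u v -> c u != c v.

(* graph distance: least k < n with a walk of length k from u to v
   (in a connected graph on n vertices such k always exists) *)
Definition dist (n m : nat) (ends : 'I_m -> 'I_n * 'I_n) (u v : 'I_n) : nat :=
  find (fun k => walk ends k u v) (iota 0 n).

Definition incidence (R : nzRingType) (n m : nat) (ends : 'I_m -> 'I_n * 'I_n)
  : 'M[R]_(n, m) :=
  \matrix_(i < n, j < m) (if (i == (ends j).1) || (i == (ends j).2) then 1 else 0).

Definition Jmat (R : nzRingType) (n m : nat) (ends : 'I_m -> 'I_n * 'I_n)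
  : 'M[R]_n :=
  \matrix_(i < n, j < n) ((-1) ^+ dist ends i j).

Definition is_MP_inverse (R : nzRingType) (p q : nat) (A : 'M[R]_(p, q))
  (X : 'M[R]_(q, p)) : Prop :=
  [/\ A *m X *m A = A, X *m A *m X = X,
      (A *m X)^T = A *m X & (X *m A)^T = X *m A].

(* Main.v *)
Require Import Defs.
From HB Require Import structures.
From mathcomp Require Import all_boot all_order all_algebra.
Import Order.TTheory GRing.Theory Num.Theory.
Local Open Scope ring_scope.
Set Implicit Arguments. Unset Strict Implicit.

Section Aux.
Variables (n m : nat) (ends : 'I_m -> 'I_n * 'I_n).

Lemma walk_path k u v : walk ends k u v ->
  exists p, [/\ size p = k, path (adj ends) u p & last u p = v].
Proof.
elim: k u => [|k IH] u /=.
  by move/eqP=> ->; exists [::].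
case/existsP=> w /andP[Huw Hw].
have [p [Hs Hp Hl]] := IH _ Hw.
by exists (w :: p); rewrite /= Hs Huw Hp Hl.
Qed.

Lemma path_walk p u : path (adj ends) u p -> walk ends (size p) u (last u p).
Proof.
elim: p u => [|w p IH] u /=; first by [].
case/andP=> Huw Hp; apply/existsP; exists w; rewrite Huw /=.
exact: IH.
Qed.

Lemma walk_parity (c : 'I_n -> bool) :
  (forall u v, adj ends u v -> c u != c v) ->
  forall k u v, walk ends k u v -> c v = c u (+) odd k.
Proof.
move=> bip; elim=> [|k IH] u v /=.
  by move/eqP=> ->; rewrite addbF.
case/existsP=> w /andP[Huw Hw].
rewrite (IH _ _ Hw).
have := bip _ _ Huw.
by case: (c u); case: (c w); case: (odd k).
Qed.

Lemma short_walk k u v : walk ends k u v -> exists2 k', (k' < n)%N & walk ends k' u v.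
Proof.
case/walk_path=> p [_ Hp <-].
case: (shortenP Hp) => p' Hp' Hu _.
exists (size p'); last exact: path_walk.
have := max_card (mem (u :: p')).
by rewrite (card_uniqP Hu) card_ord.
Qed.

Lemma dist_walk : connected_graph ends -> forall u v, walk ends (dist ends u v) u v.
Proof.
move=> Hc u v.
have [k Hk] := Hc u v.
have [k' Hk' Hw] := short_walk Hk.
have Hhas : has (fun k => walk ends k u v) (iota 0 n).
  by apply/hasP; exists k' => //; rewrite mem_iota.
have := nth_find 0%N Hhas.
rewrite /dist nth_iota //.
by have := Hhas; rewrite has_find size_iota.
Qed.

End Aux.

Theorem mainTheorem8 (R : realFieldType) (n m : nat)
  (ends : 'I_m -> 'I_n * 'I_n) :
  simple_edges ends -> connected_graph ends -> bipartite_graph ends ->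
  (forall Mp : 'M[R]_(m, n), is_MP_inverse (incidence R ends) Mp ->
     Mp *m Jmat R ends = 0) /\
  Jmat R ends *m Jmat R ends = n%:R *: Jmat R ends.
Proof.
move=> _ Hcon [c bip].
pose s (i : 'I_n) : R := (-1) ^+ c i.
pose sv : 'cV[R]_n := \col_i s i.
have Hs2 i : s i * s i = 1 by rewrite /s -expr2 sqrr_sign.
have HJ : Jmat R ends = sv *m sv^T.
  apply/matrixP=> i j; rewrite !mxE big_ord1 !mxE.
  rewrite /s (walk_parity bip (dist_walk Hcon i j)) signr_addb signr_odd.
  by rewrite mulrA -expr2 sqrr_sign mul1r.
have HMs : (incidence R ends)^T *m sv = 0.
  apply/matrixP=> e z; rewrite !mxE.
  set a := (ends e).1; set b := (ends e).2.
  have Hab : adj ends a b by apply/existsP; exists e; rewrite !eqxx.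
  have Hcab := bip _ _ Hab.
  have nab : a != b by apply: contra Hcab => /eqP ->.
  rewrite (bigD1 a) //= (bigD1 b) /=; last by rewrite eq_sym.
  rewrite [X in _ + (_ + X)](_ : _ = 0); last first.
    apply: big1 => i /andP[Hia Hib]; rewrite !mxE.
    by rewrite (negbTE Hia) (negbTE Hib) mul0r.
  rewrite !mxE eqxx /= eq_sym (negbTE nab) eqxx orbT !mul1r !addr0.
  rewrite /s; move: Hcab; case: (c a); case: (c b) => //= _.
    by rewrite expr1 expr0 addrC subrr.
  by rewrite expr1 expr0 subrr.
split.
  move=> Mp [H1 H2 H3 H4].
  have HMp : Mp *m sv = 0.
    rewrite -H2 -(mulmxA Mp) -H3 trmx_mul -!mulmxA HMs.
    by rewrite !mulmx0.
  by rewrite HJ mulmxA HMp mul0mx.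
rewrite HJ mulmxA -(mulmxA sv) .
have -> : sv^T *m sv = n%:R%:M.
  apply/matrixP=> i j; rewrite !mxE (ord1 i) (ord1 j) eqxx /=.
  under eq_bigr do rewrite !mxE Hs2.
  by rewrite sumr_const card_ord.
by rewrite mul_mx_scalar scalemxAl.
Qed.
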